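(* Let $G$ be a group with a finite generating set $S$ (with $S=S^{-1}$ and $e\notin S$). Suppose $\kappa(a)=0$ for all $a\in S$. Then $G$ is virtually abelian.
   Context: For a group $G$ with finite generating set $S$ ($S=S^{-1}$, $e\notin S$), $|x|$ denotes the word length of $x\in G$ with respect to $S$. For $g\in G$ define $\mathrm{Av}(g)=\frac{1}{|S|}\sum_{a\in S}|a^{-1}ga|$, and for $g\neq e$ define the curvature $\kappa(g)=\frac{|g|-\mathrm{Av}(g)}{|g|}$. *)

(* Defs.v *)
From Stdlib Require Import List ClassicalEpsilon.
From mathcomp Require Import all_boot all_order all_algebra.
Set Implicit Arguments. Unset Strict Implicit. Unset Printing Implicit Defensive.
Import Order.TTheory GRing.Theory Num.Theory.

Record is_group (G : Type) (mul : G -> G -> G) (inv : G -> G) (e : G) : Prop := {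
  grp_assoc : forall x y z, mul x (mul y z) = mul (mul x y) z;
  grp_idl : forall x, mul e x = x;
  grp_idr : forall x, mul x e = x;
  grp_invl : forall x, mul (inv x) x = e;
  grp_invr : forall x, mul x (inv x) = e }.

Section Words.
Variables (G : Type) (mul : G -> G -> G) (inv : G -> G) (e : G) (S : list G).

Definition word_eval (w : list G) : G := fold_right mul e w.

Definition spelled_by (x : G) (n : nat) : Prop :=
  exists w : list G, List.length w = n /\ (forall a, List.In a w -> List.In a S)
                     /\ word_eval w = x.

Definition symmetric_gen_set : Prop :=
  List.NoDup S /\ (forall a, List.In a S -> List.In (inv a) S) /\ ~ List.In e S /\
  (forall x : G, exists n, spelled_by x n).

Definition word_length (x : G) : nat :=
  epsilon (inhabits 0%N)
    (fun n => spelled_by x n /\ forall m, spelled_by x m -> (n <= m)%coq_nat).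

Local Open Scope ring_scope.

Definition Av (g : G) : rat :=
  (\sum_(a <- S) (word_length (mul (mul (inv a) g) a))%:R) / (List.length S)%:R.

Definition curvature (g : G) : rat :=
  ((word_length g)%:R - Av g) / (word_length g)%:R.

End Words.

Definition is_subgroup (G : Type) (mul : G -> G -> G) (inv : G -> G) (e : G)
  (H : G -> Prop) : Prop :=
  H e /\ (forall x y, H x -> H y -> H (mul x y)) /\ (forall x, H x -> H (inv x)).

(* G is virtually abelian: it has an abelian subgroup of finite index
   (finitely many left cosets t H cover G) *)
Definition virtually_abelian (G : Type) (mul : G -> G -> G) (inv : G -> G) (e : G)
  : Prop :=
  exists H : G -> Prop,
    is_subgroup mul inv e H /\
    (forall x y, H x -> H y -> mul x y = mul y x) /\
    exists T : list G, forall g, exists t h, List.In t T /\ H h /\ g = mul t h.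

(* Main.v *)
Require Import Defs.
From Stdlib Require Import List.
From mathcomp Require Import all_boot all_order all_algebra.
From Stdlib Require Import ClassicalEpsilon Classical Lia.
From mathcomp Require Import zify.
Set Implicit Arguments. Unset Strict Implicit.
Import GRing.Theory Num.Theory.

Lemma g_cancel_l G mul inv (e:G) (HG : is_group mul inv e) x y : mul (inv x) (mul x y) = y.
Proof. by rewrite (grp_assoc HG) (grp_invl HG) (grp_idl HG). Qed.
Lemma g_cancel_l' G mul inv (e:G) (HG : is_group mul inv e) x y : mul x (mul (inv x) y) = y.
Proof. by rewrite (grp_assoc HG) (grp_invr HG) (grp_idl HG). Qed.
Lemma g_cancel_r G mul inv (e:G) (HG : is_group mul inv e) x y : mul (mul y x) (inv x) = y.
Proof. by rewrite -(grp_assoc HG) (grp_invr HG) (grp_idr HG). Qed.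
Lemma g_cancel_r' G mul inv (e:G) (HG : is_group mul inv e) x y : mul (mul y (inv x)) x = y.
Proof. by rewrite -(grp_assoc HG) (grp_invl HG) (grp_idr HG). Qed.
Lemma g_invK G mul inv (e:G) (HG : is_group mul inv e) x : inv (inv x) = x.
Proof. by rewrite -[RHS](g_cancel_l HG (inv x)) (grp_invl HG) (grp_idr HG). Qed.

Lemma exists_min (P : nat -> Prop) : (exists n, P n) -> exists n, P n /\ forall m, P m -> (n <= m)%coq_nat.
Proof.
move=> [n Hn]; elim: n {-2}n (le_n n) Hn => [|k IH] n Hn Pn.
  exists n; split=> // m _; lia.
destruct (classic (exists m, P m /\ (m < n)%coq_nat)) as [[m [Pm Hm]]|H].
  apply: (IH m) => //; lia.
exists n; split=> // m Pm; apply: NNPP => Hc; apply: H; exists m; split=>//; lia.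
Qed.

Lemma wl_spec G mul (e:G) S x : (exists n, spelled_by mul e S x n) ->
  spelled_by mul e S x (word_length mul e S x) /\
  forall m, spelled_by mul e S x m -> (word_length mul e S x <= m)%coq_nat.
Proof.
move=> H; exact: (epsilon_spec (inhabits 0%N) _ (exists_min H)).
Qed.

Fixpoint lists G (S : list G) n : list (list G) :=
  match n with 0 => [:: [::]] | n.+1 => flat_map (fun l => List.map (fun a => a :: l) S) (lists S n) end.

Lemma in_lists G (S : list G) L : (forall x, List.In x L -> List.In x S) -> List.In L (lists S (List.length L)).
Proof.
elim: L => [|a L IH] H /=; first by left.
apply/in_flat_map; exists L; split; first by apply: IH => x Hx; apply: H; right.
apply/in_map_iff; exists a; split => //; apply: H; left; done.
Qed.

Lemma map_eq_in A B (f g : A -> B) s a : List.map f s = List.map g s -> List.In a s -> f a = g a.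
Proof. elim: s => //= b s IH [E1 E2] [<-|H] //; exact: IH. Qed.

Lemma len_le_sum (T : Type) (f : T -> nat) (s : list T) : (forall x, List.In x s -> 1 <= f x)%N ->
  (List.length s <= \sum_(x <- s) f x)%N.
Proof.
elim: s => [|b s IH] H; first by [].
rewrite big_cons /=; have := H b (or_introl erefl).
have := IH (fun y Hy => H y (or_intror Hy)). lia.
Qed.

Lemma sum_ones (T : Type) (f : T -> nat) (s : list T) : (forall x, List.In x s -> 1 <= f x)%N ->
  (\sum_(x <- s) f x)%N = List.length s -> forall x, List.In x s -> f x = 1%N.
Proof.
elim: s => //= b s IH H; rewrite big_cons => Hs x Hx.
have H1 := H b (or_introl erefl).
have H2 := len_le_sum (fun y Hy => H y (or_intror Hy)).
case: Hx => [<-|Hx]; first lia.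
apply: IH => //; first by move=> y Hy; apply: H; right.
lia.
Qed.

Lemma g_invM G mul inv (e:G) (HG : is_group mul inv e) x y : inv (mul x y) = mul (inv y) (inv x).
Proof.
rewrite -[RHS](grp_idr HG) -[in RHS](grp_invr HG (mul x y)).
by rewrite -!(grp_assoc HG) (g_cancel_l HG) (grp_assoc HG (inv y)) (grp_invl HG) (grp_idl HG).
Qed.

Lemma spelled0 G mul (e:G) S x : spelled_by mul e S x 0 -> x = e.
Proof. by case=> [[|? ?] [//= _ [_ <-]]]. Qed.

Lemma spelled1 G mul inv (e:G) (HG : is_group mul inv e) S x : spelled_by mul e S x 1 -> List.In x S.
Proof.
case=> [[|c [|? ?]] [//= _ [H <-]]]; rewrite (grp_idr HG); apply: H; left; done.
Qed.

Lemma wl_S G mul inv (e:G) (HG : is_group mul inv e) S a :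
  symmetric_gen_set mul inv e S -> List.In a S -> word_length mul e S a = 1%N.
Proof.
move=> [_ [_ [He Hgen]]] Ha.
have [H1 H2] := wl_spec (Hgen a).
have Hs1 : spelled_by mul e S a 1 by exists [:: a]; split=> //; split=> /= [b [<-|[]]|] //; rewrite (grp_idr HG).
have Hle := H2 _ Hs1.
case E: (word_length mul e S a) H1 Hle => [|n] H1 Hle; last lia.
by have Hae := spelled0 H1; rewrite Hae in Ha.
Qed.

Lemma wl_pos G mul inv (e:G) S x :
  symmetric_gen_set mul inv e S -> x <> e -> (1 <= word_length mul e S x)%N.
Proof.
move=> [_ [_ [He Hgen]]] Hx.
have [H1 H2] := wl_spec (Hgen x).
case E: (word_length mul e S x) H1 => [|n] H1 //.
by have := spelled0 H1.
Qed.

Lemma conjS G mul inv (e:G) (HG : is_group mul inv e) S :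
  symmetric_gen_set mul inv e S ->
  (forall a, List.In a S -> curvature mul inv e S a = 0%R) ->
  forall a b, List.In a S -> List.In b S -> List.In (mul (mul (inv b) a) b) S.
Proof.
move=> Hsym Hc a b Ha Hb.
have He : ~ List.In e S by case: Hsym => [_ [_ []]].
have := Hc a Ha; rewrite /curvature (wl_S HG Hsym Ha) divr1 /Av.
move/eqP; rewrite subr_eq0 eq_sym; move/eqP.
have Hn : ((List.length S)%:R != 0 :> rat)%R.
  by rewrite pnatr_eq0; case: (S) Ha.
move/(congr1 (fun z : rat => (z * (List.length S)%:R)%R)); rewrite mul1r divfK // -natr_sum.
move/eqP; rewrite eqr_nat; move/eqP => Hsum.
have Hpos : forall b, List.In b S -> (1 <= word_length mul e S (mul (mul (inv b) a) b))%N.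
  move=> c _; apply: (wl_pos Hsym) => Hce.
  apply: He; have : a = e.
    by rewrite -(g_cancel_l' HG c a) -(g_cancel_r HG c (mul (inv c) a)) Hce (grp_idl HG) (grp_invr HG).
  by move=> <-.
have H1 := sum_ones Hpos Hsum Hb.
case: Hsym => [_ [_ [_ Hgen]]].
have [Hs _] := wl_spec (Hgen (mul (mul (inv b) a) b)).
rewrite H1 in Hs; exact: (spelled1 HG Hs).
Qed.

Lemma conjG G mul inv (e:G) (HG : is_group mul inv e) S :
  symmetric_gen_set mul inv e S ->
  (forall a b, List.In a S -> List.In b S -> List.In (mul (mul (inv b) a) b) S) ->
  forall g a, List.In a S -> List.In (mul (mul g a) (inv g)) S.
Proof.
move=> Hsym Hcl g a Ha.
have [Hinv Hgen] : (forall a, List.In a S -> List.In (inv a) S) /\ (forall x : G, exists n, spelled_by mul e S x n).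
  by case: Hsym => [_ [? [_ ?]]].
have [n [w [_ [Hw <-]]]] := Hgen g.
elim: w Hw => [|b w IH] Hw /=.
  have Hie : inv e = e by rewrite -[LHS](grp_idl HG) (grp_invr HG).
  by rewrite Hie (grp_idl HG) (grp_idr HG).
have IH' := IH (fun x Hx => Hw x (or_intror Hx)).
have Hb : List.In b S by apply: Hw; left.
have := Hcl _ _ IH' (Hinv _ Hb).
rewrite (g_invK HG) (g_invM HG).
by rewrite -!(grp_assoc HG).
Qed.

Lemma comm_all G mul inv (e:G) (HG : is_group mul inv e) S x :
  symmetric_gen_set mul inv e S ->
  (forall a, List.In a S -> mul x a = mul a x) -> forall g, mul x g = mul g x.
Proof.
move=> Hsym Hx g.
have [n [w [_ [Hw <-]]]] : exists n, spelled_by mul e S g n by case: Hsym => [_ [_ [_ H]]].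
elim: w Hw => [|b w IH] Hw /=; first by rewrite (grp_idl HG) (grp_idr HG).
rewrite (grp_assoc HG) Hx; last by apply: Hw; left.
by rewrite -!(grp_assoc HG) IH // => y Hy; apply: Hw; right.
Qed.

Definition chooseT G (mul : G -> G -> G) (inv : G -> G) (e:G) (S : list G) (L : list G) : G :=
  epsilon (inhabits e) (fun t => List.map (fun a => mul (mul t a) (inv t)) S = L).

Local Open Scope ring_scope.

Theorem mainTheorem1 (G : Type) (mul : G -> G -> G) (inv : G -> G) (e : G)
  (S : list G) :
  is_group mul inv e ->
  symmetric_gen_set mul inv e S ->
  (forall a, List.In a S -> curvature mul inv e S a = 0) ->
  virtually_abelian mul inv e.
Proof.
move=> HG Hsym Hc.
have Hcl := conjG HG Hsym (conjS HG Hsym Hc).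
exists (fun x => forall a, List.In a S -> mul x a = mul a x); split; [|split].
- split; first by move=> a _; rewrite (grp_idl HG) (grp_idr HG).
  split.
    move=> x y Hx Hy a Ha; by rewrite -(grp_assoc HG) Hy // (grp_assoc HG) Hx // (grp_assoc HG).
  move=> x Hx a Ha.
  have := congr1 (fun z => mul (inv x) (mul z (inv x))) (Hx a Ha).
  rewrite /= -!(grp_assoc HG) (g_cancel_l HG) (grp_invr HG) (grp_idr HG) => ->; done.
- by move=> x y Hx _; apply: (comm_all HG Hsym Hx).
- exists (List.map (chooseT mul inv e S) (lists S (List.length S))) => g.
  set L := List.map (fun a => mul (mul g a) (inv g)) S.
  set t := chooseT mul inv e S L.
  have Ht : List.map (fun a => mul (mul t a) (inv t)) S = L.
    apply: (epsilon_spec (inhabits e) (fun t => List.map (fun a => mul (mul t a) (inv t)) S = L)).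
    by exists g.
  exists t, (mul (inv t) g); split; [|split].
  + apply/in_map_iff; exists L; split => //.
    have := @in_lists _ S L; rewrite /L length_map; apply.
    by move=> x /in_map_iff [a [<- Ha]]; apply: Hcl.
  + move=> a Ha; have E := map_eq_in Ht Ha.
    have := congr1 (fun z => mul (inv t) (mul z g)) E.
    rewrite /= -!(grp_assoc HG) (g_cancel_l HG) (grp_invl HG) (grp_idr HG) => ->.
    done.
  + by rewrite (g_cancel_l' HG).
Qed.
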